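(* Let $m\geq4$ be an integer, let $G$ be an $m$-free digraph, let $v\in V(G)$ and let $k$ be an integer with $1\leq k\leq m-3$. Put $V_1=\bigcup_{i=1}^{k+1}N_i^+(v)$ and $V_2=V(G)\setminus V_1$. Then the set of edges of $G$ from $V_1$ to $V_2$ equals $E(N^+_{k+1}(v),N^+_{k+2}(v))$, so it has exactly $p_k(v)$ elements, and the number of pairs $(a,b)\in V_1\times V_2$ such that neither $(a,b)$ nor $(b,a)$ is an edge is at least $s_k(v)$.
   Context: All digraphs are finite, without loops and without parallel edges. A digraph is $m$-free if it has no directed cycle of length at most $m$. For a vertex $v$ and $i\geq 0$, $N_i^+(v)$ is the set of vertices $u$ such that the shortest directed path from $v$ to $u$ has length exactly $i$. For $A,B\subseteq V(G)$, $E(A,B)$ is the set of edges $(a,b)$ with $a\in A$, $b\in B$. A directed path $(v_0,\dots,v_k)$ consists of distinct vertices with $(v_i,v_{i+1})$ an edge for each $i$; its length is $k$. It is induced if every edge of $G$ with both ends in $\{v_0,\dots,v_k\}$ is one of the edges $(v_i,v_{i+1})$; it is a shortest induced directed path if it is induced and $v_k\in N_k^+(v_0)$. Let $\mathscr{P}(G)$ be the set of shortest induced directed paths of $G$. For an integer $k\geq1$ and $v\in V(G)$: $P_k(v)$ is the set of triples $(x,y,z)$ of vertices for which there exist vertices $w_1,\dots,w_k$ with $(x,w_1,\dots,w_k,y,z)\in\mathscr{P}(G)$ and $x=v$. $P'_k(v)$ (resp. $Q'_k(v)$) is the set of triples $(x,y,z)$ for which there exist $w_1,\dots,w_k$ with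 $(x,y,w_1,\dots,w_k,z)\in\mathscr{P}(G)$ and $x=v$ (resp. $y=v$). $p_k(v)=|P_k(v)|$, $p'_k(v)=|P'_k(v)|$, $q'_k(v)=|Q'_k(v)|$. For $1\leq k\leq m-3$: $s_k(v)=\sum_{i=k}^{m-3}p'_i(v)+\sum_{i=1}^{k}q'_i(v)$. *)

(* Defs.v *)
(* A digraph is a relation [e : rel T] on a finite type [T]
   that is irreflexive (no loops); parallel edges cannot occur. *)
From mathcomp Require Import all_boot.
Set Implicit Arguments. Unset Strict Implicit. Unset Printing Implicit Defensive.

Section Digraphs.
Variables (T : finType) (e : rel T).

(* x :: s is a directed path (distinct vertices, consecutive edges);
   it goes from x to [last x s] and has length [size s]. *)
Definition dpath (x : T) (s : seq T) : bool := path e x s && uniq (x :: s).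

(* m-free: no directed cycle of length at most m.  A directed cycle of length
   l is given by distinct vertices x :: s (l = size s + 1) with consecutive
   edges and the closing edge (last x s, x). *)
Definition mfree (m : nat) : Prop :=
  forall (x : T) (s : seq T), dpath x s -> e (last x s) x -> m < (size s).+1.

(* N_i^+(v) : u such that a shortest directed path from v to u has length i *)
Definition inN (v : T) (i : nat) (u : T) : bool :=
  [exists s : i.-tuple T, dpath v s && (last v s == u)] &&
  [forall j : 'I_i, forall s : j.-tuple T, ~~ (dpath v s && (last v s == u))].

Definition induced (x0 : T) (p : seq T) : bool :=
  [forall i : 'I_(size p), forall j : 'I_(size p),
     e (nth x0 p i) (nth x0 p j) ==> (nat_of_ord j == (nat_of_ord i).+1)].

(* membership in the set of shortest induced directed paths of G *)
Definition sip (p : seq T) : bool :=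
  match p with
  | [::] => false
  | x :: s => [&& dpath x s, induced x p & inN x (size s) (last x s)]
  end.

(* P_k(v), P'_k(v), Q'_k(v) as sets of triples ((x, y), z) *)
Definition Pk (k : nat) (v : T) : {set T * T * T} :=
  [set t : T * T * T | (t.1.1 == v) &&
     [exists w : k.-tuple T, sip (t.1.1 :: (tval w ++ [:: t.1.2; t.2]))]].
Definition Ppk (k : nat) (v : T) : {set T * T * T} :=
  [set t : T * T * T | (t.1.1 == v) &&
     [exists w : k.-tuple T, sip (t.1.1 :: t.1.2 :: (tval w ++ [:: t.2]))]].
Definition Qpk (k : nat) (v : T) : {set T * T * T} :=
  [set t : T * T * T | (t.1.2 == v) &&
     [exists w : k.-tuple T, sip (t.1.1 :: t.1.2 :: (tval w ++ [:: t.2]))]].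

Definition p_ (k : nat) (v : T) : nat := #|Pk k v|.
Definition p'_ (k : nat) (v : T) : nat := #|Ppk k v|.
Definition q'_ (k : nat) (v : T) : nat := #|Qpk k v|.

Definition s_ (m k : nat) (v : T) : nat :=
  (\sum_(k <= i < (m - 3).+1) p'_ i v) + (\sum_(1 <= i < k.+1) q'_ i v).

Definition V1 (k : nat) (v : T) : {set T} :=
  [set u | [exists i : 'I_(k.+2), (0 < nat_of_ord i) && inN v i u]].
Definition V2 (k : nat) (v : T) : {set T} := ~: V1 k v.

Definition Eset (A B : {set T}) : {set T * T} :=
  [set ab : T * T | [&& ab.1 \in A, ab.2 \in B & e ab.1 ab.2]].

Definition Nset (v : T) (i : nat) : {set T} := [set u | inN v i u].

Definition nonadj (A B : {set T}) : {set T * T} :=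
  [set ab : T * T | [&& ab.1 \in A, ab.2 \in B, ~~ e ab.1 ab.2 & ~~ e ab.2 ab.1]].

End Digraphs.

(* Main.v *)
Require Import Defs.
From mathcomp Require Import all_boot zify.
Set Implicit Arguments. Unset Strict Implicit. Unset Printing Implicit Defensive.

Section L.
Variables (T : finType) (e : rel T).

Lemma inN_ex v i u : inN e v i u ->
  exists s, [/\ size s = i, path e v s, uniq (v :: s) & last v s = u].
Proof.
case/andP=> /existsP[s /andP[/andP[p un] /eqP l]] _.
by exists (tval s); rewrite size_tuple.
Qed.

Lemma inN_uniq v i j u : inN e v i u -> inN e v j u -> i = j.
Proof.
wlog lt: i j / i < j.
  move=> H Hi Hj; case: (ltngtP i j) => [l|l|//]; first exact: H.
  by symmetry; apply: H.
case/andP=> /existsP[s Hs] _ /andP[_ /forallP /(_ (Ordinal lt)) /forallP /(_ s)].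
by rewrite Hs.
Qed.

Lemma inN0 v u : inN e v 0 u -> u = v.
Proof. by case/inN_ex=> [[|? ?] [] //= _ _ <-]. Qed.

Lemma W v s : path e v s -> exists j, j <= size s /\ inN e v j (last v s).
Proof.
case/shortenP=> s' ps' us' ss'.
have szle : size s' <= size s by apply: uniq_leq_size => //; case/andP: us'.
pose P := fun n => [exists t : n.-tuple T, dpath e v t && (last v t == last v s')].
have Ps : P (size s') by apply/existsP; exists (in_tuple s'); rewrite /dpath ps' us' eqxx.
have exP : exists n, P n by exists (size s').
case: (ex_minnP exP) => n Pn minn.
exists n; split; first exact: leq_trans (minn _ Ps) szle.
apply/andP; split => //; apply/forallP => j; apply/forallP => t; apply/negP => Ht.
have : n <= j by apply: minn; apply/existsP; exists t.
by rewrite leqNgt ltn_ord.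
Qed.

Lemma subwalk0 d x s j i : path e x s -> j <= i -> i <= size s ->
  exists t, [/\ path e (nth d (x :: s) j) t, last (nth d (x :: s) j) t = nth d (x :: s) i
           & size t = i - j].
Proof.
elim: s x j i => [|y s IH] x j i.
  move=> _ ji; rewrite leqn0 => /eqP i0; subst i; move: ji; rewrite leqn0 => /eqP ->.
  by exists [::]; split.
move=> /= /andP[exy ps]; case: j => [|j]; case: i => [|i] //.
- by move=> _ _; exists [::]; split.
- move=> _ /= hi; have [t [pt lt st]] := IH y 0 i ps (leq0n _) hi.
  exists (y :: t); split => /=; first by rewrite exy pt.
    by [].
  by rewrite st !subn0.
- by move=> /= hj hi; apply: IH.
Qed.

Lemma subwalk x s j i : path e x s -> j <= i -> i <= size s ->
  exists t, [/\ path e (nth x (x :: s) j) t, last (nth x (x :: s) j) t = nth x (x :: s) i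
           & size t = i - j].
Proof. exact: subwalk0. Qed.

Lemma C m w t : mfree e m -> path e w t -> e (last w t) w -> m < (size t).+1.
Proof.
move=> mf pt ew; have [j [jle hj]] := W pt.
have [s [ss ps us ls]] := inN_ex hj.
have := mf w s; rewrite /dpath ps us ls => /(_ isT ew); rewrite ss. lia.
Qed.

Lemma prefix x s : path e x s -> inN e x (size s) (last x s) ->
  forall t, t <= size s -> inN e x t (nth x (x :: s) t).
Proof.
move=> ps hl t ts.
have [q [pq lq sq]] := subwalk ps (leq0n t) ts.
have [d [dle hd]] := W pq; move: hd; rewrite lq /= => hd.
rewrite sq subn0 in dle.
have [dlt|dge] := ltnP d t; last first. have tdE : d = t by lia. rewrite -{1}tdE. exact: hd.
have [r [pr lr sr]] := subwalk ps ts (leqnn _).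
have [q' [sq' pq' _ lq']] := inN_ex hd.
have pc : path e x (q' ++ r) by rewrite cat_path pq' lq' pr.
have [d' [d'le hd']] := W pc.
move: hd'; rewrite last_cat lq' lr.
rewrite (_ : nth x (x :: s) (size s) = last x s); last first.
  by rewrite -[size s]/((size (x :: s)).-1) nth_last.
move=> hd'; have := inN_uniq hd' hl; move: d'le; rewrite size_cat sq' sr. lia.
Qed.

Lemma from1 x y s : path e x (y :: s) -> inN e x (size s).+1 (last y s) ->
  inN e y (size s) (last y s).
Proof.
move=> /= /andP[exy ps] hl.
have [d [dle hd]] := W ps.
have [dlt|dge] := ltnP d (size s); last first. have tdE : d = size s by lia. rewrite -{1}tdE. exact: hd.
have [q [sq pq _ lq]] := inN_ex hd.
have pc : path e x (y :: q) by rewrite /= exy pq.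
have [d' [d'le hd']] := W pc; move: hd'; rewrite /= lq => hd'.
have := inN_uniq hd' hl; move: d'le => /=; rewrite sq. lia.
Qed.

Lemma sp_induced m x s : mfree e m -> path e x s -> inN e x (size s) (last x s) ->
  size s < m -> induced e x (x :: s).
Proof.
move=> mf ps hl sm; apply/forallP => a; apply/forallP => b; apply/implyP => eab.
have ha : a <= size s by have := ltn_ord a.
have hb : b <= size s by have := ltn_ord b.
case: (leqP b a) => ba.
  have [t [pt lt st]] := subwalk ps ba ha.
  have := C mf pt; rewrite lt => /(_ eab); rewrite st. lia.
have [q [sq pq _ lq]] := inN_ex (prefix ps hl ha).
have pc : path e x (rcons q (nth x (x :: s) b)) by rewrite rcons_path pq lq eab.
have [d [dle hd]] := W pc; move: hd; rewrite last_rcons => hd.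
have := inN_uniq hd (prefix ps hl hb); move: dle; rewrite size_rcons sq.
move=> ? ?; apply/eqP; lia.
Qed.

End L.

Lemma bigcup_natP (X : finType) (F : nat -> {set X}) lo hi x :
  x \in \bigcup_(lo <= i < hi) F i -> exists2 i, lo <= i < hi & x \in F i.
Proof.
elim: hi => [|hi IH]; first by rewrite big_geq // in_set0.
case: (leqP lo hi) => h; last by rewrite big_geq ?in_set0.
rewrite big_nat_recr //= in_setU => /orP [/IH [i /andP[h1 h2] xi] | xh].
  by exists i => //; rewrite h1 ltnS ltnW.
by exists hi => //; rewrite h ltnSn.
Qed.

Lemma card_bigcup_nat (X : finType) (F : nat -> {set X}) lo hi :
  (forall i j, i != j -> [disjoint F i & F j]) ->
  #|\bigcup_(lo <= i < hi) F i| = \sum_(lo <= i < hi) #|F i|.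
Proof.
move=> dj; elim: hi => [|hi IH]; first by rewrite !big_geq // cards0.
case: (leqP lo hi) => h; last by rewrite !big_geq ?cards0.
rewrite !big_nat_recr //= cardsU IH.
have -> : (\bigcup_(lo <= i < hi) F i) :&: F hi = set0.
  apply/setP=> x; rewrite inE in_set0; apply/andP => [[/bigcup_natP [i /andP[_ ihi] xi] xh]].
  have := dj i hi; rewrite neq_ltn ihi => /(_ isT) /disjointFr /(_ xi).
  by rewrite xh.
by rewrite cards0 subn0.
Qed.

Section M.
Variables (T : finType) (e : rel T).

Lemma EsetE (A B : {set T}) ab : (ab \in Eset e A B) = [&& ab.1 \in A, ab.2 \in B & e ab.1 ab.2].
Proof. by rewrite inE. Qed.
Lemma nonadjE (A B : {set T}) ab :
  (ab \in nonadj e A B) = [&& ab.1 \in A, ab.2 \in B, ~~ e ab.1 ab.2 & ~~ e ab.2 ab.1].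
Proof. by rewrite inE. Qed.
Lemma NsetE v i u : (u \in Nset e v i) = inN e v i u.
Proof. by rewrite inE. Qed.
Lemma V2E k v u : (u \in V2 e k v) = (u \notin V1 e k v).
Proof. by rewrite /V2 in_setC. Qed.
Lemma V1P k v u : reflect (exists d, [/\ 0 < d, d <= k.+1 & inN e v d u]) (u \in V1 e k v).
Proof.
rewrite /V1 inE; apply: (iffP existsP) => [[i /andP[i0 hi]] | [d [d0 dk hd]]].
  by exists (val i); split => //; have := ltn_ord i.
by exists (Ordinal (dk : d < k.+2)); rewrite /= d0 hd.
Qed.

Lemma nth_end (d z : T) (w : seq T) : nth d (w ++ [:: z]) (size w) = z.
Proof. by rewrite nth_cat ltnn subnn. Qed.

Lemma LA t i v : t \in Ppk e i v ->
  [/\ t.1.1 = v, inN e v 1 t.1.2, inN e v i.+2 t.2 &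
     (0 < i -> ~~ e t.1.2 t.2 && ~~ e t.2 t.1.2)].
Proof.
case: t => [[x y] z]; rewrite inE /= => /andP[/eqP xv /existsP[w hs]]; subst x.
move: hs; rewrite /sip => /and3P[/andP[ps us] ind hl].
have hl' : inN e v i.+2 z.
  by move: hl; rewrite /= size_cat size_tuple last_cat /= addn1.
split => //.
  by have := prefix ps hl (t:=1); rewrite /= size_cat; apply.
move=> i0.
have sz : size (v :: y :: (tval w ++ [:: z])) = i.+3 by rewrite /= size_cat size_tuple addn1.
have h1 : 1 < size (v :: y :: (tval w ++ [:: z])) by rewrite sz.
have h2 : i.+2 < size (v :: y :: (tval w ++ [:: z])) by rewrite sz.
have nz : nth v (tval w ++ [:: z]) i = z.
  by rewrite -{2}(size_tuple w) nth_end.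
apply/andP; split; apply/negP => E.
  move: ind => /forallP /(_ (Ordinal h1)) /forallP /(_ (Ordinal h2)) /implyP.
  rewrite /= nz => /(_ E) /eqP; lia.
move: ind => /forallP /(_ (Ordinal h2)) /forallP /(_ (Ordinal h1)) /implyP.
by rewrite /= nz => /(_ E).
Qed.

Lemma LB m t i v : mfree e m -> t \in Qpk e i v ->
  [/\ t.1.2 = v, inN e v i.+1 t.2, (forall d, inN e v d t.1.1 -> m < d.+1) &
     ~~ e t.1.1 t.2 && ~~ e t.2 t.1.1].
Proof.
move=> mf; case: t => [[x y] z]; rewrite inE /= => /andP[/eqP yv /existsP[w hs]]; subst y.
move: hs; rewrite /sip => /and3P[/andP[ps us] ind hl].
split => //.
  have := from1 ps; rewrite size_cat size_tuple last_cat /= addn1; apply.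
  by move: hl; rewrite /= size_cat size_tuple last_cat /= addn1.
  move=> d hd; have [q [sq pq _ lq]] := inN_ex hd.
  have := C mf pq; rewrite lq sq; apply; by case/andP: ps.
have sz : size (x :: v :: (tval w ++ [:: z])) = i.+3 by rewrite /= size_cat size_tuple addn1.
have h1 : 0 < size (x :: v :: (tval w ++ [:: z])) by rewrite sz.
have h2 : i.+2 < size (x :: v :: (tval w ++ [:: z])) by rewrite sz.
have nz : nth x (tval w ++ [:: z]) i = z.
  by rewrite -{2}(size_tuple w) nth_end.
apply/andP; split; apply/negP => E.
  move: ind => /forallP /(_ (Ordinal h1)) /forallP /(_ (Ordinal h2)) /implyP.
  by rewrite /= nz => /(_ E).
move: ind => /forallP /(_ (Ordinal h2)) /forallP /(_ (Ordinal h1)) /implyP.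
by rewrite /= nz => /(_ E).
Qed.

End M.

Theorem mainTheorem7 (T : finType) (e : rel T) (m : nat) (v : T) (k : nat) :
  irreflexive e -> 4 <= m -> mfree e m -> 1 <= k -> k <= m - 3 ->
  Eset e (V1 e k v) (V2 e k v) = Eset e (Nset e v k.+1) (Nset e v k.+2) /\
  #|Eset e (V1 e k v) (V2 e k v)| = p_ e k v /\
  s_ e m k v <= #|nonadj e (V1 e k v) (V2 e k v)|.
Proof.
move=> irr m4 mf k1 km.
have P1 : Eset e (V1 e k v) (V2 e k v) = Eset e (Nset e v k.+1) (Nset e v k.+2).
  apply/setP => [[a b]]; rewrite !EsetE /= !NsetE V2E; apply/idP/idP.
    case/and3P => /V1P [d [d0 dk hd]] nb eab.
    have [q [sq pq _ lq]] := inN_ex hd.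
    have pc : path e v (rcons q b) by rewrite rcons_path pq lq eab.
    have [d' [d'le hd']] := W pc; move: hd'; rewrite last_rcons => hd'.
    rewrite size_rcons sq in d'le.
    case: (posnP d') => [d'0 | d'p].
      rewrite d'0 in hd'; have bv := inN0 hd'; subst b.
      have := C mf pq; rewrite lq sq => /(_ eab); lia.
    case: (leqP d' k.+1) => d'k.
      by move: nb; have -> : b \in V1 e k v by apply/V1P; exists d'.
    have E1 : d = k.+1 by lia.
    have E2 : d' = k.+2 by lia.
    by rewrite E1 in hd; rewrite E2 in hd'; rewrite hd hd' eab.
  case/and3P => ha hb eab; rewrite eab andbT; apply/andP; split.
    by apply/V1P; exists k.+1.
  apply/V1P => [[d [d0 dk hd]]]; have := inN_uniq hd hb; lia.
split => //; split.
  rewrite P1 /p_.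
  have -> : Pk e k v = (fun ab => (v, ab.1, ab.2)) @: Eset e (Nset e v k.+1) (Nset e v k.+2).
    apply/setP => t; apply/idP/imsetP.
      case: t => [[x y] z]; rewrite inE /= => /andP[/eqP xv /existsP[w hs]]; subst x.
      move: hs; rewrite /sip => /and3P[/andP[ps us] ind hl].
      move: hl; rewrite size_cat size_tuple last_cat /= addn2 => hz.
      have hy := prefix ps; rewrite size_cat size_tuple last_cat /= addn2 in hy.
      have := hy hz k.+1 (leqnSn _); rewrite /= nth_cat size_tuple ltnn subnn /= => hy'.
      move: ps; rewrite cat_path => /andP[_ /= /and3P[_ eyz _]].
      by exists (y, z); rewrite // EsetE /= !NsetE hy' hz eyz.
    case => [[a b]]; rewrite EsetE /= !NsetE => /and3P[ha hb eab] ->.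
    rewrite inE /= eqxx /=; apply/existsP.
    have [s0 [ss ps us ls]] := inN_ex ha.
    case: (lastP s0) ss ps us ls => [|w c] //= ss ps us ls.
    rewrite last_rcons in ls; subst c.
    have sw : size w == k by rewrite size_rcons in ss; rewrite -eqSS ss.
    exists (Tuple sw) => /=.
    have -> : w ++ [:: a; b] = rcons (rcons w a) b by rewrite -!cats1 -catA.
    set s := rcons w a in ss ps us *.
    have hl : inN e v (size s) (last v s) by rewrite ss /s last_rcons.
    have ps' : path e v (rcons s b) by rewrite rcons_path ps /s last_rcons eab.
    have hl' : inN e v (size (rcons s b)) (last v (rcons s b)) by rewrite size_rcons ss last_rcons.
    rewrite /sip /dpath ps' (sp_induced mf ps' hl'); last by rewrite size_rcons ss; lia.
    rewrite hl' !andbT andTb -rcons_cons rcons_uniq; apply/andP; split; last exact: us.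
    apply/negP => bin.
    have ib : index b (v :: s) <= size s by rewrite -ltnS -[(size s).+1]/(size (v :: s)) index_mem.
    have := prefix ps hl ib; rewrite nth_index // => hib.
    have := inN_uniq hib hb; move: ib; rewrite ss; lia.
  by rewrite card_imset // => [[a b]] [c d] /= [-> ->].
pose FA i := (fun t : T * T * T => (t.1.2, t.2)) @: Ppk e i v.
pose FB i := (fun t : T * T * T => (t.2, t.1.1)) @: Qpk e i v.
have cA i : #|FA i| = p'_ e i v.
  apply: card_in_imset => [[[x y] z]] [[x' y'] z'] /LA [/= -> _ _ _] /LA [/= -> _ _ _] /= [-> ->] //.
have cB i : #|FB i| = q'_ e i v.
  apply: card_in_imset => [[[x y] z]] [[x' y'] z'] /(LB mf) [/= -> _ _ _] /(LB mf) [/= -> _ _ _] /= [-> ->] //.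
have djA : forall i j, i != j -> [disjoint FA i & FA j].
  move=> i j ij; rewrite -setI_eq0; apply/eqP/setP => ab; rewrite inE in_set0.
  apply/andP => [[/imsetP [t /LA [_ _ ht _] ->] /imsetP [t' /LA [_ _ ht' _] E]]].
  case: E => _ E; rewrite E in ht; have := inN_uniq ht ht'; move: ij => /eqP; lia.
have djB : forall i j, i != j -> [disjoint FB i & FB j].
  move=> i j ij; rewrite -setI_eq0; apply/eqP/setP => ab; rewrite inE in_set0.
  apply/andP => [[/imsetP [t /(LB mf) [_ ht _ _] ->] /imsetP [t' /(LB mf) [_ ht' _ _] E]]].
  case: E => E _; rewrite E in ht; have := inN_uniq ht ht'; move: ij => /eqP; lia.
set UA := \bigcup_(k <= i < (m - 3).+1) FA i.
set UB := \bigcup_(1 <= i < k.+1) FB i.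
have sA : #|UA| = \sum_(k <= i < (m - 3).+1) p'_ e i v.
  by rewrite card_bigcup_nat //; apply: eq_bigr => i _; rewrite cA.
have sB : #|UB| = \sum_(1 <= i < k.+1) q'_ e i v.
  by rewrite card_bigcup_nat //; apply: eq_bigr => i _; rewrite cB.
have dAB : UA :&: UB = set0.
  apply/setP => ab; rewrite inE in_set0; apply/andP.
  move=> [/bigcup_natP [i _ /imsetP [t /LA [_ h1 _ _] ->]]
          /bigcup_natP [j /andP[j1 _] /imsetP [t' /(LB mf) [_ h2 _ _] E]]].
  case: E => E _; rewrite E in h1; have := inN_uniq h1 h2; lia.
rewrite /s_ -sA -sB.
have -> : #|UA| + #|UB| = #|UA :|: UB| by rewrite cardsU dAB cards0 subn0.
apply: subset_leq_card; apply/subsetP => ab; rewrite in_setU nonadjE V2E.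
case/orP => [/bigcup_natP [i /andP[ki _] /imsetP [t /LA [_ h1 h2 h3] ->]] |
             /bigcup_natP [j /andP[j1 jk] /imsetP [t /(LB mf) [_ h1 h2 h3] ->]]] /=.
  rewrite h3; last by lia.
  rewrite andbT; apply/andP; split; first by apply/V1P; exists 1.
  by apply/V1P => [[d [d0 dk hd]]]; have := inN_uniq hd h2; lia.
case/andP: h3 => n1 n2; rewrite n1 n2 !andbT; apply/andP; split; first by apply/V1P; exists j.+1.
by apply/V1P => [[d [d0 dk hd]]]; have := h2 d hd; lia.
Qed.
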